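(* If $\Delta\subseteq\mathbb{R}^d$ is a Delzant polytope, then $\Upsilon(\Delta)=\mathrm{width}(\Delta)$.
   Context: A Delzant polytope is a full-dimensional polytope $\Delta\subseteq\mathbb{R}^d$ (vertices need not be lattice points) whose normal fan consists of unimodular cones, i.e. at each vertex the primitive inner normals of the $d$ incident facets form a basis of $(\mathbb{Z}^d)^*$. Write the facets as $\{x\in\Delta:\langle u_k,x\rangle=-\phi_k\}$, $k=1,\dots,m$, with $u_k\in(\mathbb{Z}^d)^*$ primitive inner facet normals and $\phi_k\in\mathbb{R}$, so $\Delta=\{x:\langle u_k,x\rangle\ge-\phi_k\ \forall k\}$. $\Upsilon(\Delta)$ is the minimum of all positive values $\sum_{k=1}^m a_k\phi_k$ where $a_k$ are nonnegative integers with $\sum_{k=1}^m a_ku_k=0$. $\mathrm{width}(\Delta)=\min_{u\in(\mathbb{Z}^d)^*\setminus\{0\}}\max_{x,y\in\Delta}|u(x)-u(y)|$. *)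

(* Defs.v *)
From HB Require Import structures.
From mathcomp Require Import all_boot all_order all_algebra.
Set Implicit Arguments. Unset Strict Implicit. Unset Printing Implicit Defensive.
Import Order.TTheory GRing.Theory Num.Theory.
Local Open Scope ring_scope.

Definition pair (R : realFieldType) (d : nat) (u : 'rV[int]_d) (x : 'rV[R]_d) : R :=
  \sum_(i < d) (u ord0 i)%:~R * x ord0 i.

Definition inPoly (R : realFieldType) (d m : nat) (u : 'I_m -> 'rV[int]_d)
  (phi : 'I_m -> R) (x : 'rV[R]_d) : Prop :=
  forall k, - phi k <= pair (u k) x.

Definition active (R : realFieldType) (d m : nat) (u : 'I_m -> 'rV[int]_d)
  (phi : 'I_m -> R) (x : 'rV[R]_d) (k : 'I_m) : Prop :=
  pair (u k) x = - phi k.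

Definition primitive (d : nat) (v : 'rV[int]_d) : Prop :=
  forall (c : int) (w : 'rV[int]_d), v = c *: w -> `|c| = 1.

Definition is_vertex (R : realFieldType) (d m : nat) (u : 'I_m -> 'rV[int]_d)
  (phi : 'I_m -> R) (x : 'rV[R]_d) : Prop :=
  inPoly u phi x /\
  forall y : 'rV[R]_d, inPoly u phi (x + y) -> inPoly u phi (x - y) -> y = 0.

Definition delzant (R : realFieldType) (d m : nat) (u : 'I_m -> 'rV[int]_d)
  (phi : 'I_m -> R) : Prop :=
  (forall k, primitive (u k)) /\
  (exists B : R, forall x, inPoly u phi x -> forall i, `|x ord0 i| <= B) /\
  (exists x : 'rV[R]_d, forall k, - phi k < pair (u k) x) /\
  (* each inequality defines a facet (distinct facets): the facet has a
     point lying on no other facet *)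
  (forall k, exists x, inPoly u phi x /\ active u phi x k /\
                       forall j, j != k -> - phi j < pair (u j) x) /\
  (* unimodularity at each vertex: exactly d incident facets, whose normals
     form a Z-basis of (Z^d)^* *)
  (forall x, is_vertex u phi x ->
     exists s : 'I_d -> 'I_m, injective s /\
       (forall k, active u phi x k <-> exists i, s i = k) /\
       (\matrix_(i < d, j < d) u (s i) ord0 j) \in unitmx).

Definition is_Upsilon (R : realFieldType) (d m : nat) (u : 'I_m -> 'rV[int]_d)
  (phi : 'I_m -> R) (v : R) : Prop :=
  0 < v /\
  (exists a : 'I_m -> nat, \sum_k u k *+ a k = 0 /\ \sum_k phi k *+ a k = v) /\
  (forall a : 'I_m -> nat, \sum_k u k *+ a k = 0 -> 0 < \sum_k phi k *+ a k ->
     v <= \sum_k phi k *+ a k).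

Definition is_width (R : realFieldType) (d m : nat) (u : 'I_m -> 'rV[int]_d)
  (phi : 'I_m -> R) (w : R) : Prop :=
  (exists v : 'rV[int]_d, v != 0 /\
     (exists x y, inPoly u phi x /\ inPoly u phi y /\ `|pair v x - pair v y| = w) /\
     (forall x y, inPoly u phi x -> inPoly u phi y -> `|pair v x - pair v y| <= w)) /\
  (forall v : 'rV[int]_d, v != 0 ->
     exists x y, inPoly u phi x /\ inPoly u phi y /\ w <= `|pair v x - pair v y|).

(* Main.v *)
Require Import Defs.
From HB Require Import structures.
From mathcomp Require Import all_boot all_order all_algebra.
From mathcomp Require Import ring lra zify.
From Stdlib Require Import Classical.
Set Implicit Arguments. Unset Strict Implicit. Unset Printing Implicit Defensive.
Import Order.TTheory GRing.Theory Num.Theory.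
Local Open Scope ring_scope.

Section Aux.
Variable R : realFieldType.
Variable d : nat.

Lemma pairDr (w : 'rV[int]_d) (x y : 'rV[R]_d) : pair w (x + y) = pair w x + pair w y.
Proof. by rewrite /pair -big_split; apply: eq_bigr => i _; rewrite mxE mulrDr. Qed.

Lemma pairZr (w : 'rV[int]_d) (t : R) (x : 'rV[R]_d) : pair w (t *: x) = t * pair w x.
Proof. by rewrite /pair mulr_sumr; apply: eq_bigr => i _; rewrite mxE mulrCA. Qed.

Lemma pairNr (w : 'rV[int]_d) (x : 'rV[R]_d) : pair w (- x) = - pair w x.
Proof. by rewrite -scaleN1r pairZr mulN1r. Qed.

Lemma pairBr (w : 'rV[int]_d) (x y : 'rV[R]_d) : pair w (x - y) = pair w x - pair w y.
Proof. by rewrite pairDr pairNr. Qed.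

Lemma pairDl (w1 w2 : 'rV[int]_d) (x : 'rV[R]_d) : pair (w1 + w2) x = pair w1 x + pair w2 x.
Proof. by rewrite /pair -big_split; apply: eq_bigr => i _; rewrite mxE intrD mulrDl. Qed.

Lemma pair0l (x : 'rV[R]_d) : pair 0 x = 0.
Proof. by rewrite /pair big1 // => i _; rewrite mxE mul0r. Qed.

Lemma pairNl (w : 'rV[int]_d) (x : 'rV[R]_d) : pair (- w) x = - pair w x.
Proof. by rewrite /pair -sumrN; apply: eq_bigr => i _; rewrite mxE intrN mulNr. Qed.

Lemma pairMnl (w : 'rV[int]_d) n (x : 'rV[R]_d) : pair (w *+ n) x = pair w x *+ n.
Proof. by elim: n => [|n IH]; rewrite ?mulr0n ?pair0l // !mulrS pairDl IH. Qed.

Lemma pairZl (c : int) (w : 'rV[int]_d) (x : 'rV[R]_d) : pair (c *: w) x = c%:~R * pair w x.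
Proof. by rewrite /pair mulr_sumr; apply: eq_bigr => i _; rewrite !mxE intrM mulrA. Qed.

Lemma pair_sum (I : finType) (P : pred I) (f : I -> 'rV[int]_d) (x : 'rV[R]_d) :
  pair (\sum_(i | P i) f i) x = \sum_(i | P i) pair (f i) x.
Proof. exact: (big_morph (fun w => pair w x) (fun a b => pairDl a b x) (pair0l x)). Qed.

Lemma pair_mx (w : 'rV[int]_d) (x : 'rV[R]_d) : pair w x = (x *m (map_mx intr w)^T) 0 0.
Proof. by rewrite /pair mxE; apply: eq_bigr => i _; rewrite !mxE mulrC. Qed.

End Aux.

Section Poly.
Variable R : realFieldType.
Variables d m : nat.
Variable u : 'I_m -> 'rV[int]_d.
Variable phi : 'I_m -> R.

Definition Uc (a : 'I_m -> nat) := \sum_k u k *+ a k.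
Definition Phc (a : 'I_m -> nat) := \sum_k phi k *+ a k.
Definition slack (x : 'rV[R]_d) k := pair (u k) x + phi k.

Lemma slack_ge0 x k : inPoly u phi x -> 0 <= slack x k.
Proof. by move=> H; rewrite /slack -lerBlDr sub0r. Qed.

Lemma slack_id a x : pair (Uc a) x + Phc a = \sum_k slack x k *+ a k.
Proof.
rewrite /Uc /Phc pair_sum -big_split; apply: eq_bigr => k _.
by rewrite pairMnl /slack mulrnDl.
Qed.

Lemma Phc_pos a x0 k : (forall j, - phi j < pair (u j) x0) ->
  Uc a = 0 -> (0 < a k)%N -> 0 < Phc a.
Proof.
move=> Hx0 HU Hk; have := slack_id a x0; rewrite HU pair0l add0r => ->.
rewrite (bigD1 k) //=; apply: ltr_pwDl.
  by rewrite pmulrn_lgt0 // /slack -ltrBlDr sub0r.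
by apply: sumr_ge0 => j _; apply: mulrn_wge0; rewrite /slack -lerBlDr sub0r ltW.
Qed.

Lemma Phc_bound a k z : inPoly u phi z -> Uc a = 0 -> (0 < a k)%N ->
  slack z k <= Phc a.
Proof.
move=> Hz HU Hk; have := slack_id a z; rewrite HU pair0l add0r => ->.
rewrite (bigD1 k) //=; apply: ler_wpDr.
  by apply: sumr_ge0 => j _; apply: mulrn_wge0; apply: slack_ge0.
by rewrite -{1}(mulr1n (slack z k)); apply: ler_wpMn2l => //; apply: slack_ge0.
Qed.

Lemma Phc_min a z : Uc a = 0 -> inPoly u phi z -> 0 <= Phc a.
Proof.
move=> HU Hz; have := slack_id a z; rewrite HU pair0l add0r => ->.
by apply: sumr_ge0 => j _; apply: mulrn_wge0; apply: slack_ge0.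
Qed.


Lemma step x y : inPoly u phi x ->
  (forall k, pair (u k) x = - phi k -> 0 <= pair (u k) y) ->
  (exists k, pair (u k) y < 0) ->
  exists t, 0 < t /\ inPoly u phi (x + t *: y) /\
    exists k, - phi k < pair (u k) x /\ pair (u k) (x + t *: y) = - phi k.
Proof.
move=> Hx Hact [k1 Hk1].
pose P := [pred k | pair (u k) y < 0].
pose F k := slack x k / - pair (u k) y.
have Pk1 : P k1 by [].
case: (arg_minP F Pk1) => k0 Pk0 Hmin.
have Hy0 : pair (u k0) y < 0 := Pk0.
have Hin0 : - phi k0 < pair (u k0) x.
  rewrite lt_neqAle Hx andbT; apply/negP => /eqP H.
  by have := Hact k0 (esym H); rewrite leNgt Hy0.
have Ht : 0 < F k0.
  by rewrite /F divr_gt0 // ?oppr_gt0 // /slack -ltrBlDr sub0r.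
exists (F k0); split => //; split.
  move=> k; rewrite pairDr pairZr.
  case: (leP 0 (pair (u k) y)) => Hky.
    have := Hx k; have := mulr_ge0 (ltW Ht) Hky; lra.
  have Hk : F k0 <= F k by apply: Hmin.
  move: Hk; rewrite /F ler_pdivlMr ?oppr_gt0 // /slack.
  set T := slack x k0 / - pair (u k0) y; lra.
exists k0; split => //; rewrite pairDr pairZr /F /slack.
field; exact: ltr0_neq0.
Qed.


Lemma nonvertex z : inPoly u phi z -> ~ is_vertex u phi z ->
  exists y, y != 0 /\ inPoly u phi (z + y) /\ inPoly u phi (z - y).
Proof.
move=> Hz Hnv; apply: NNPP => Hne; apply: Hnv; split => // y H1 H2.
apply/eqP; apply: NNPP => Hy; apply: Hne; exists y; split => //; exact/negP.
Qed.

Lemma row_nz (y : 'rV[R]_d) : y != 0 -> exists i, y ord0 i != 0.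
Proof.
move=> Hy; apply: NNPP => H; move/negP: Hy; apply; apply/eqP/rowP => i.
rewrite mxE; apply/eqP; apply: NNPP => Hi; apply: H; exists i; exact/negP.
Qed.

Lemma unbounded (B : R) (x y : 'rV[R]_d) : (forall x, inPoly u phi x -> forall i, `|x ord0 i| <= B) ->
  inPoly u phi x -> y != 0 -> (forall k, 0 <= pair (u k) y) -> False.
Proof.
move=> HB Hx Hy Hk; have [i Hi] := row_nz Hy.
have HB0 : 0 <= B by apply: le_trans (HB x Hx i).
have Hyi : 0 < `|y ord0 i| by rewrite normr_gt0.
pose t := (B + `|x ord0 i| + 1) / `|y ord0 i|.
have Ht : 0 <= t by rewrite /t divr_ge0 // ?ltW //; have := normr_ge0 (x ord0 i); lra.
have Hz : inPoly u phi (x + t *: y).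
  move=> k; rewrite pairDr pairZr; have := Hx k; have := mulr_ge0 Ht (Hk k); lra.
have := HB _ Hz i; rewrite !mxE.
have Hty : `|t * y ord0 i| = B + `|x ord0 i| + 1.
  rewrite normrM (ger0_norm Ht) /t divfK //; exact: lt0r_neq0.
have := ler_normB (x ord0 i + t * y ord0 i) (x ord0 i).
rewrite addrAC subrr add0r Hty; lra.
Qed.

Definition inact z := [set k | - phi k < pair (u k) z].

Lemma descent (B : R) v (z : 'rV[R]_d) : (forall x, inPoly u phi x -> forall i, `|x ord0 i| <= B) ->
  inPoly u phi z -> exists z', is_vertex u phi z' /\ pair v z' <= pair v z.
Proof.
move=> HB; have [n Hn] := ubnP #|inact z|; elim: n z Hn => // n IH z Hn Hz.
case: (classic (is_vertex u phi z)) => Hv; first by exists z.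
have [y0 [Hy0 [Hp Hm]]] := nonvertex Hz Hv.
have [y [Hy [Hp' [Hm' Hvy]]]] : exists y, y != 0 /\ inPoly u phi (z + y) /\
    inPoly u phi (z - y) /\ pair v y <= 0.
  case: (leP (pair v y0) 0) => H; first by exists y0.
  exists (- y0); rewrite oppr_eq0 opprK pairNr; split => //; split => //; split => //.
  lra.
have Hact : forall k, pair (u k) z = - phi k -> pair (u k) y = 0.
  move=> k Hk; have H1 := Hp' k; have H2 := Hm' k.
  rewrite pairDr Hk in H1; rewrite pairBr Hk in H2; lra.
have [k1 Hk1] : exists k, pair (u k) y < 0.
  apply: NNPP => H; apply: (unbounded HB Hz Hy) => k.
  rewrite leNgt; apply/negP => Hk; apply: H; by exists k.
have Hact' : forall k, pair (u k) z = - phi k -> 0 <= pair (u k) y.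
  by move=> k Hk; rewrite Hact.
have [t [Ht [Hz' [k0 [Hk0a Hk0b]]]]] := step Hz Hact' (ex_intro _ k1 Hk1).
have [z' [Hz'v Hz'le]] : exists z', is_vertex u phi z' /\ pair v z' <= pair v (z + t *: y).
  apply: IH Hz'; rewrite -ltnS; apply: leq_trans Hn; rewrite ltnS.
  apply: proper_card; apply/properP; split.
    apply/subsetP => k; rewrite !inE; apply: contraTT => Hk.
    have Hk' : pair (u k) z = - phi k by apply/eqP; rewrite eq_le (Hz k) andbT leNgt.
    by rewrite pairDr pairZr Hact // mulr0 addr0 Hk' ltxx.
  by exists k0; rewrite inE ?Hk0a // Hk0b ltxx.
exists z'; split => //; apply: le_trans Hz'le _.
rewrite pairDr pairZr; have := mulr_ge0_le0 (ltW Ht) Hvy; lra.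
Qed.

Definition Mz (f : 'I_d -> 'I_m) : 'M[int]_d := \matrix_(i < d, j < d) u (f i) ord0 j.
Definition Mr f : 'M[R]_d := map_mx (fun z : int => z%:~R) (Mz f).
Definition cvec (f : 'I_d -> 'I_m) : 'rV[R]_d := \row_i (- phi (f i)).
Definition xs f := cvec f *m invmx (Mr f)^T.
Definition inPolyb x := [forall k, - phi k <= pair (u k) x].

Lemma inPolyP x : reflect (inPoly u phi x) (inPolyb x).
Proof. exact: (iffP forallP). Qed.

Lemma pair_Mr f (x : 'rV[R]_d) i : (x *m (Mr f)^T) ord0 i = pair (u (f i)) x.
Proof. by rewrite !mxE /pair; apply: eq_bigr => j _; rewrite !mxE mulrC. Qed.

Lemma Mr_unit f : Mz f \in unitmx -> (Mr f)^T \in unitmx.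
Proof.
rewrite unitmx_tr !unitmxE /Mr det_map_mx; exact: rmorph_unit.
Qed.

Lemma xs_act f : Mz f \in unitmx -> forall i, pair (u (f i)) (xs f) = - phi (f i).
Proof.
move=> Hu i; rewrite -pair_Mr /xs mulmxKV ?Mr_unit // mxE //.
Qed.

Lemma xs_uniq f x : Mz f \in unitmx ->
  (forall i, pair (u (f i)) x = - phi (f i)) -> x = xs f.
Proof.
move=> Hu H; have Hx : x *m (Mr f)^T = cvec f.
  by apply/rowP => i; rewrite pair_Mr H mxE.
by rewrite /xs -Hx mulmxK ?Mr_unit.
Qed.

Definition Hvert := forall x, is_vertex u phi x -> exists s : 'I_d -> 'I_m,
  injective s /\ (forall k, active u phi x k <-> exists i, s i = k) /\ Mz s \in unitmx.

Definition good (F : {ffun 'I_d -> 'I_m}) := (Mz F \in unitmx) && inPolyb (xs F).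

Lemma vertex_good x : Hvert -> is_vertex u phi x -> exists F, good F /\ x = xs F.
Proof.
move=> HV Hx; have [s [_ [Ha Hu]]] := HV x Hx.
have HMz : Mz [ffun i => s i] = Mz s by apply/matrixP => i j; rewrite !mxE ffunE.
have Hxs : x = xs [ffun i => s i].
  apply: xs_uniq; first by rewrite HMz.
  by move=> i; rewrite ffunE; apply/Ha; exists i.
exists [ffun i => s i]; split => //; rewrite /good HMz Hu /= -Hxs.
by apply/inPolyP; case: Hx.
Qed.

Lemma good_vertex F : good F -> is_vertex u phi (xs F).
Proof.
case/andP => Hu /inPolyP Hin; split => // y Hp Hm.
have Hy : forall i, pair (u (F i)) y = 0.
  move=> i; have H1 := Hp (F i); have H2 := Hm (F i).
  rewrite pairDr xs_act // in H1; rewrite pairBr xs_act // in H2; lra.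
have : y *m (Mr F)^T = 0 by apply/rowP => i; rewrite pair_Mr Hy mxE.
by move/(congr1 (mulmx^~ (invmx (Mr F)^T))); rewrite mulmxK ?Mr_unit // mul0mx.
Qed.

Lemma global_min (B : R) x0 v : Hvert ->
  (forall x, inPoly u phi x -> forall i, `|x ord0 i| <= B) ->
  inPoly u phi x0 ->
  exists x, is_vertex u phi x /\ forall z, inPoly u phi z -> pair v x <= pair v z.
Proof.
move=> HV HB Hx0.
have [z0 [Hz0 _]] := descent v HB Hx0.
have [F0 [HF0 _]] := vertex_good HV Hz0.
case: (@arg_minP _ _ _ F0 good (fun F : {ffun 'I_d -> 'I_m} => pair v (xs F)) HF0) => F HF Hmin.
exists (xs F); split; first exact: good_vertex.
move=> z Hz; have [z' [Hz' Hle]] := descent v HB Hz.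
have [F' [HF' HE]] := vertex_good HV Hz'; rewrite HE in Hle.
exact: le_trans (Hmin _ HF') Hle.
Qed.

Lemma regroup (V : zmodType) (G : 'I_m -> V) (s : 'I_d -> 'I_m) (n : 'I_d -> nat) :
  \sum_k G k *+ (\sum_(j | s j == k) n j) = \sum_j G (s j) *+ n j.
Proof.
symmetry; rewrite (partition_big s xpredT) //=; apply: eq_bigr => k _.
rewrite -sumrMnr; apply: eq_bigr => j /eqP <-. done.
Qed.

Lemma cone (v : 'rV[int]_d) (x : 'rV[R]_d) : Hvert -> is_vertex u phi x ->
  (forall z, inPoly u phi z -> pair v x <= pair v z) ->
  exists a, Uc a = v /\ pair v x = - Phc a.
Proof.
move=> HV Hx Hmin; have [s [_ [Ha Hu]]] := HV x Hx.
pose b := v *m invmx (Mz s).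
have Hv : v = \sum_j b ord0 j *: u (s j).
  rewrite -{1}(mulmxKV Hu v) -/b mulmx_sum_row; apply: eq_bigr => j _.
  by congr (_ *: _); apply/rowP => i; rewrite !mxE.
have Hb : forall i, 0 <= b ord0 i.
  move=> i; rewrite leNgt; apply/negP => Hbi.
  pose y : 'rV[R]_d := delta_mx 0 i *m invmx (Mr s)^T.
  have Hy : forall j, pair (u (s j)) y = (i == j)%:R.
    move=> j; rewrite -pair_Mr /y mulmxKV ?Mr_unit // mxE (eq_sym j i); case: (i == j); rewrite ?andbF //=.
  have Hvy : pair v y = (b ord0 i)%:~R.
    rewrite Hv pair_sum (bigD1 i) //= big1 ?addr0.
      by rewrite pairZl Hy eqxx mulr1.
    by move=> j Hj; rewrite pairZl Hy eq_sym (negbTE Hj) mulr0.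
  have Hxin : inPoly u phi x by case: Hx.
  have Hact : forall k, pair (u k) x = - phi k -> 0 <= pair (u k) y.
    move=> k Hk; have [j <-] : exists j, s j = k by apply/Ha.
    by rewrite Hy; case: (i == j).
  have [t [Ht Hin]] : exists t, 0 < t /\ inPoly u phi (x + t *: y).
    case: (classic (exists k, pair (u k) y < 0)) => H.
      by have [t [Ht [Hin _]]] := step Hxin Hact H; exists t.
    exists 1; split => // k; rewrite pairDr pairZr mul1r.
    have : 0 <= pair (u k) y by rewrite leNgt; apply/negP => Hk; apply: H; exists k.
    have := Hxin k; lra.
  have := Hmin _ Hin; rewrite pairDr pairZr Hvy.
  have : (b ord0 i)%:~R < 0 :> R by rewrite ltrz0.
  have := mulr_gt0 Ht; nra.
pose n j := `|b ord0 j|%N.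
exists (fun k => \sum_(j | s j == k) n j).
have Hun : forall j, u (s j) *+ n j = b ord0 j *: u (s j).
  by move=> j; rewrite -scaler_nat natz /n gez0_abs.
split.
  by rewrite /Uc regroup Hv; apply: eq_bigr => j _; rewrite Hun.
rewrite /Phc regroup Hv pair_sum -sumrN; apply: eq_bigr => j _.
rewrite -Hun pairMnl -mulNrn; congr (_ *+ _); apply/Ha; by exists j.
Qed.

Definition Wprop (v : 'rV[int]_d) (w : R) := exists x y (r : 'I_m -> nat),
  inPoly u phi x /\ inPoly u phi y /\ Uc r = 0 /\ (exists k, (0 < r k)%N) /\
  Phc r = w /\ pair v y - pair v x = w /\
  forall z, inPoly u phi z -> pair v x <= pair v z /\ pair v z <= pair v y.

Lemma KL (B : R) x0 (v : 'rV[int]_d) : Hvert ->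
  (forall x, inPoly u phi x -> forall i, `|x ord0 i| <= B) ->
  inPoly u phi x0 ->
  exists x a, inPoly u phi x /\ Uc a = v /\ pair v x = - Phc a.
Proof.
move=> HV HB Hx0; have [x [Hx Hmin]] := global_min v HV HB Hx0.
have [a [Ha1 Ha2]] := cone HV Hx Hmin.
by exists x, a; split => //; case: Hx.
Qed.

Lemma lower_bound a (v : 'rV[int]_d) x z : Uc a = v -> pair v x = - Phc a ->
  inPoly u phi z -> pair v x <= pair v z.
Proof.
move=> Ha Hx Hz; have := slack_id a z; rewrite Ha => H.
have : 0 <= \sum_k slack z k *+ a k.
  by apply: sumr_ge0 => j _; apply: mulrn_wge0; apply: slack_ge0.
rewrite -H Hx; lra.
Qed.

Lemma width_rel (B : R) x0 (v : 'rV[int]_d) : Hvert ->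
  (forall x, inPoly u phi x -> forall i, `|x ord0 i| <= B) ->
  inPoly u phi x0 -> v != 0 -> exists w, Wprop v w.
Proof.
move=> HV HB Hx0 Hv0.
have [x [a [Hx [Ha Hxa]]]] := KL v HV HB Hx0.
have [y [c [Hy [Hc Hyc]]]] := KL (- v) HV HB Hx0.
exists (pair v y - pair v x), x, y, (fun k => (a k + c k)%N).
have HUr : Uc (fun k => (a k + c k)%N) = 0.
  by rewrite /Uc (eq_bigr (fun k => u k *+ a k + u k *+ c k)) ?big_split /=
    -/(Uc a) -/(Uc c) ?Ha ?Hc ?subrr // => k _; rewrite mulrnDr.
split => //; split => //; split => //; split.
  apply: NNPP => H; move/eqP: Hv0; apply; rewrite -Ha /Uc big1 // => k _.
  case Hak: (a k) => [|n]; first by rewrite mulr0n.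
  by exfalso; apply: H; exists k; rewrite Hak.
split.
  rewrite /Phc (eq_bigr (fun k => phi k *+ a k + phi k *+ c k)) ?big_split /=.
    rewrite -/(Phc a) -/(Phc c); move: Hyc; rewrite pairNl; lra.
  by move=> k _; rewrite mulrnDr.
split => // z Hz; split; first exact: lower_bound Ha Hxa Hz.
have := lower_bound Hc Hyc Hz; rewrite !pairNl; lra.
Qed.

End Poly.

From Stdlib Require Import IndefiniteDescription.

Unset Implicit Arguments.
Theorem proposition3p7 (R : realFieldType) (d m : nat)
  (u : 'I_m -> 'rV[int]_d) (phi : 'I_m -> R) :
  (0 < d)%N -> delzant u phi ->
  exists w : R, is_Upsilon u phi w /\ is_width u phi w.
Proof.
move=> Hd [Hprim [[B HB] [[x0 Hx0] [_ Hvx]]]].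
have HV : Hvert u phi by move=> x Hx; exact: Hvx.
have Hx0' : inPoly u phi x0 by move=> k; exact: ltW.
have Hunz : forall k, u k != 0.
  move=> k; apply/eqP => Hk; have := Hprim k 0 (u k); rewrite scale0r Hk.
  by move=> /(_ erefl).
have HW := fun k => width_rel (v:=u k) HV HB Hx0' (Hunz k).
pose W k := proj1_sig (constructive_indefinite_description _ (HW k)).
have HWk : forall k, Wprop u phi (u k) (W k).
  by move=> k; rewrite /W; case: constructive_indefinite_description.
have Wle : forall k a, Uc u a = 0 -> (0 < a k)%N -> W k <= Phc phi a.
  move=> k a Ha Hak; have [x [y [r [Hx [Hy [_ [_ [_ [Hw _]]]]]]]]] := HWk k.
  have := Phc_bound Hy Ha Hak; have := Hx k; rewrite /slack -Hw; lra.
have [i0 _] : exists k : 'I_m, True.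
  pose e : 'rV[int]_d := delta_mx 0 (Ordinal Hd).
  have He : e != 0.
    apply/eqP => /rowP /(_ (Ordinal Hd)); rewrite !mxE eqxx /=; done.
  have [w [x [y [r [_ [_ [_ [[k _] _]]]]]]]] := width_rel (v:=e) HV HB Hx0' He.
  by exists k.
case: (@arg_minP _ _ _ i0 xpredT W erefl) => k0 _ Hmin.
have Hpos : forall a, Uc u a = 0 -> 0 < Phc phi a -> exists k, (0 < a k)%N.
  move=> a Ha Hp; apply: NNPP => H; move: Hp; rewrite /Phc big1 ?ltxx // => k _.
  case Hak: (a k) => [|n]; first by rewrite mulr0n.
  by exfalso; apply: H; exists k; rewrite Hak.
have [x [y [r [Hx [Hy [Hr [[kr Hkr] [Hw [Hw' Hxy]]]]]]]]] := HWk k0.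
have Wpos : 0 < W k0 by rewrite -Hw; exact: Phc_pos Hx0 Hr Hkr.
exists (W k0); split.
  split => //; split; first by exists r.
  move=> a Ha Hp; have [k Hk] := Hpos a Ha Hp.
  exact: le_trans (Hmin k erefl) (Wle k a Ha Hk).
split.
  exists (u k0); split; first exact: Hunz.
  split; first by exists y, x; rewrite Hw' ger0_norm // ltW.
  move=> z z' Hz Hz'; have [H1 H2] := Hxy z Hz; have [H3 H4] := Hxy z' Hz'.
  rewrite -Hw' ler_norml; apply/andP; split; lra.
move=> v Hv; have [w' [x' [y' [r' [Hx' [Hy' [Hr' [[k Hk] [Hw2 [Hw2' _]]]]]]]]]] :=
  width_rel (v:=v) HV HB Hx0' Hv.
exists y', x'; split => //; split => //.
apply: le_trans (Hmin k erefl) _; apply: le_trans (Wle k r' Hr' Hk) _.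
by rewrite Hw2 -Hw2' ler_norm.
Qed.
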